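(* Let $G$ be an undirected multigraph with minimum degree at least $3$ and let $(C,F)$ be a FVC in $G$. Then $|F|\le e(C,F)$.
   Context: The degree of a vertex counts edge-endpoints, a self-loop contributing two. For disjoint $X,Y\subseteq V(G)$, $e(X,Y)$ is the number of edges with one endpoint in $X$ and the other in $Y$. A feedback vertex cut (FVC) in $G$ is a pair of disjoint sets $C,F\subseteq V(G)$ such that $G[F]$ is a forest (self-loops and parallel edges count as cycles) and every tree $T$ of $G[F]$ satisfies $e(V(T),V(G)\setminus(C\cup F))\le1$. *)

(* Defs.v *)
From mathcomp Require Import all_boot.
Set Implicit Arguments. Unset Strict Implicit. Unset Printing Implicit Defensive.

(* A finite undirected multigraph: vertex set V, edge set E, and each edge e
   has the (unordered) pair of endpoints {src e, dst e}.  Self-loops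
   (src e = dst e) and parallel edges are allowed. *)

Section MG.
Variables (V E : finType) (src dst : E -> V).

(* degree: number of edge-endpoints at v (a self-loop contributes 2) *)
Definition deg (v : V) : nat :=
  #|[set e : E | src e == v]| + #|[set e : E | dst e == v]|.

Definition joins (e : E) (u w : V) : bool :=
  ((src e == u) && (dst e == w)) || ((src e == w) && (dst e == u)).

Definition eXY (X Y : {set V}) : nat :=
  #|[set e : E | ((src e \in X) && (dst e \in Y)) ||
                 ((src e \in Y) && (dst e \in X))]|.

(* A cycle of length k.+1 in G[F]: distinct vertices vs i in F and distinct
   edges es i, with es i joining vs i and vs (i+1 mod k.+1).  Length 1 is a
   self-loop, length 2 a pair of parallel edges. *)
Definition has_cycle_in (F : {set V}) : Prop :=
  exists (k : nat) (vs : 'I_k.+1 -> V) (es : 'I_k.+1 -> E),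
    [/\ injective vs, injective es,
        forall i, vs i \in F &
        forall i, joins (es i) (vs i) (vs (ordS i))].

Definition is_forest (F : {set V}) : Prop := ~ has_cycle_in F.

Definition adjIn (F : {set V}) : rel V :=
  fun u w => [&& u \in F, w \in F & [exists e : E, joins e u w]].

Definition compIn (F : {set V}) (x : V) : {set V} :=
  [set y | connect (adjIn F) x y].

Definition FVC (C F : {set V}) : Prop :=
  [/\ [disjoint C & F], is_forest F &
      forall x, x \in F -> eXY (compIn F x) (~: (C :|: F)) <= 1].

End MG.

(* Main.v *)
Require Import Defs.
From mathcomp Require Import all_boot zify.
Set Implicit Arguments. Unset Strict Implicit. Unset Printing Implicit Defensive.

Section S.
Variables (V E : finType) (src dst : E -> V).
Local Notation joins := (joins src dst).
Local Notation adjIn := (adjIn src dst).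
Local Notation has_cycle_in := (has_cycle_in src dst).

Lemma joinsC e u w : joins e u w = joins e w u.
Proof. by rewrite /Defs.joins orbC. Qed.

Lemma ordS_2 k (i i' : 'I_k.+1) : 1 < k -> i' = ordS i -> i = ordS i' -> False.
Proof.
move=> hk /(congr1 val) /= h1 /(congr1 val) /= h2.
have hi := ltn_ord i; have hi' := ltn_ord i'.
move: h1 h2; case: (ltnP i.+1 k.+1) => a.
  rewrite (modn_small a) => ->.
  case: (ltnP i.+2 k.+1) => b; first by rewrite (modn_small b); lia.
  have -> : i.+2 = k.+1 by lia.
  rewrite modnn; lia.
have e : i.+1 = k.+1 by lia.
rewrite e modnn => ->; rewrite modn_small; lia.
Qed.

Lemma es_inj k (vs : 'I_k.+1 -> V) (es : 'I_k.+1 -> E) : 1 < k -> injective vs ->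
  (forall i, joins (es i) (vs i) (vs (ordS i))) -> injective es.
Proof.
move=> hk hvs hj i i' eq.
have := hj i; have := hj i'; rewrite eq /Defs.joins.
case/orP => /andP[/eqP a /eqP b]; case/orP => /andP[/eqP c /eqP d].
- by apply hvs; congruence.
- exfalso; apply: (@ordS_2 k i i') => //; apply hvs; congruence.
- exfalso; apply: (@ordS_2 k i i') => //; apply hvs; congruence.
- by apply hvs; congruence.
Qed.

Lemma cyc_from (F : {set V}) (s : seq V) x0 k (es : 'I_k.+1 -> E) :
  k < size s -> uniq s -> {subset s <= F} -> injective es ->
  (forall i : 'I_k.+1, joins (es i) (nth x0 s i) (nth x0 s (ordS i))) ->
  has_cycle_in F.
Proof.
move=> hk us sF ie hj.
exists k, (fun i => nth x0 s i), es; split => //.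
- move=> i j /eqP; rewrite nth_uniq //; last 2 first.
    by apply: leq_trans (ltn_ord i) _.
    by apply: leq_trans (ltn_ord j) _.
  by move/eqP/val_inj.
- move=> i; apply: sF; apply: mem_nth; exact: leq_trans (ltn_ord i) _.
Qed.


Lemma adjC (F : {set V}) u w : adjIn F u w = adjIn F w u.
Proof.
rewrite /Defs.adjIn andbCA; congr [&& _, _ & _].
by apply/existsP/existsP => -[e h]; exists e; rewrite joinsC.
Qed.

Lemma path_sub (F : {set V}) x p : x \in F -> path (adjIn F) x p -> {subset x :: p <= F}.
Proof.
elim: p x => [|y p IH] x xF /=; first by move=> _ z; rewrite mem_seq1 => /eqP->.
case/andP => /and3P[_ yF _] hp z; rewrite in_cons => /orP[/eqP->//|].
exact: IH.
Qed.

Lemma rev_pathS (F : {set V}) x p : path (adjIn F) x p ->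
  exists x' p', [/\ path (adjIn F) x' p', rev (x::p) = x' :: p', x' = last x p & last x' p' = x].
Proof.
move=> hp; exists (last x p), (rev (belast x p)).
have e1 : rev (x :: p) = last x p :: rev (belast x p) by rewrite lastI rev_rcons.
split => //.
- by rewrite rev_path (@eq_path _ _ (adjIn F)) // => a b /=; exact: adjC.
- by rewrite -(last_cons x) -e1 rev_cons last_rcons.
Qed.

Definition closedv (F : {set V}) y (s : seq V) := forall e w, joins e y w -> w \in F -> w \in s.

Lemma ext_front (F : {set V}) : forall n x p, #|V| - size (x::p) <= n -> x \in F ->
  path (adjIn F) x p -> uniq (x::p) ->
  exists y q, [/\ y \in F, path (adjIn F) y q, uniq (y::q), closedv F y (y::q) &
     last y q = last x p /\ {subset x::p <= y::q}].
Proof.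
elim=> [|n IH] x p hn xF hp hu;
  (case: (boolP [exists e, exists w, [&& joins e x w, w \in F & w \notin x::p]]);
    last first).
- move=> /existsPn hne; exists x, p; (do ?split) => //; move=> e w hj wF.
  move: (hne e) => /existsPn /(_ w); rewrite hj wF /=; by move/negbNE.
- case/existsP => e /existsP [w /and3P[hj wF wn]].
  have : uniq (w :: x :: p) by rewrite cons_uniq wn hu.
  move/card_uniqP => hs; have := max_card (mem (w :: x :: p)).
  rewrite hs /=; move: hn => /=; lia.
- move=> /existsPn hne; exists x, p; (do ?split) => //; move=> e w hj wF.
  move: (hne e) => /existsPn /(_ w); rewrite hj wF /=; by move/negbNE.
- case/existsP => e /existsP [w /and3P[hj wF wn]].
  have hu' : uniq (w :: x :: p) by rewrite cons_uniq wn hu.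
  have := max_card (mem (w :: x :: p)); rewrite (card_uniqP hu') => hs.
  have hp' : path (adjIn F) w (x :: p).
    rewrite /= hp andbT /Defs.adjIn wF xF /=; apply/existsP; exists e; by rewrite joinsC.
  have [y [q [yF hq uq cq [lq sq]]]] := IH w (x :: p) ltac:(move: hn hs => /=; lia) wF hp' hu'.
  exists y, q; split => //; split => // z hz; apply: sq; by rewrite inE hz orbT.
Qed.


Lemma no_loop (F : {set V}) x e : is_forest src dst F -> x \in F -> joins e x x -> False.
Proof.
move=> hf xF hj; apply: hf; apply: (@cyc_from F [::x] x 0 (fun _ => e)) => //.
- by move=> z; rewrite mem_seq1 => /eqP->.
- by move=> i j _; rewrite (ord1 i) (ord1 j).
- by move=> i; rewrite (ord1 i) /=.
Qed.

Lemma nth_inj (x : V) s k : uniq s -> k < size s ->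
  injective (fun i : 'I_k.+1 => nth x s i).
Proof.
move=> us hk i j /eqP; rewrite nth_uniq //; last 2 first.
  by apply: leq_trans (ltn_ord i) _.
  by apply: leq_trans (ltn_ord j) _.
by move/eqP/val_inj.
Qed.

Lemma long_cyc (F : {set V}) x p j f : x \in F -> path (adjIn F) x p -> uniq (x::p) ->
  1 < j -> j <= size p -> joins f x (nth x (x::p) j) -> has_cycle_in F.
Proof.
move=> xF hp hu hj1 hjs hf.
pose s := x :: p.
pose es := fun i : 'I_j.+1 => if i < j then odflt f [pick e | joins e (nth x s i) (nth x s i.+1)] else f.
have hJ : forall i : 'I_j.+1, joins (es i) (nth x s i) (nth x s (ordS i)).
  move=> i; rewrite /es; case: ltnP => hi.
  - have -> : nat_of_ord (ordS i) = i.+1 by rewrite /= modn_small.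
    case: pickP => [//|none]; exfalso.
    move/(pathP x): hp => /(_ i ltac:(lia)).
    case/and3P => _ _ /existsP [e he]; by have := none e; rewrite he.
  - have ei : nat_of_ord i = j by have := ltn_ord i; lia.
    have -> : nat_of_ord (ordS i) = 0 by rewrite /= ei modnn.
    by rewrite ei joinsC.
have vinj := @nth_inj x s j hu hjs.
apply: (@cyc_from F s x j es) => //.
- exact: (path_sub xF hp).
- exact: (@es_inj j (fun i : 'I_j.+1 => nth x s i)).
Qed.

Lemma two_cyc (F : {set V}) x p e e' : x \in F -> path (adjIn F) x p -> uniq (x::p) ->
  0 < size p -> e != e' -> joins e x (nth x p 0) -> joins e' x (nth x p 0) -> has_cycle_in F.
Proof.
move=> xF hp hu hs ne he he'.
pose es := fun i : 'I_2 => if val i == 0 then e else e'.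
apply: (@cyc_from F (x :: p) x 1 es) => //.
- exact: path_sub.
- move=> [[|[|//]] hi] [[|[|//]] hi'] //= h; first by apply: val_inj.
  + by move: h; rewrite /es /= => h; rewrite h eqxx in ne.
  + by move: h; rewrite /es /= => h; rewrite h eqxx in ne.
  + by apply: val_inj.
- move=> [[|[|//]] hi]; rewrite /es /=; first by [].
  by rewrite joinsC.
Qed.

Lemma leaf (F : {set V}) x p e e' w w' : is_forest src dst F -> x \in F ->
  path (adjIn F) x p -> uniq (x::p) -> closedv F x (x::p) ->
  joins e x w -> joins e' x w' -> w \in F -> w' \in F -> e = e'.
Proof.
move=> hf xF hp hu cl.
have key : forall f u, joins f x u -> u \in F -> u = nth x p 0 /\ 0 < size p.
  move=> f u hfu uF; have us := cl f u hfu uF.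
  have hjs : index u (x::p) < size (x::p) by rewrite index_mem.
  have hn := nth_index x us.
  move: hjs hn; case: (index u (x::p)) => [|[|j]] /= hjs hn.
  - by exfalso; apply: (no_loop hf xF (e:=f)); move: hfu; rewrite -hn.
  - by split => //; lia.
  - exfalso; apply: hf; apply: (@long_cyc F x p j.+2 f) => //; try lia.
    by rewrite /= hn.
move=> he he' wF w'F.
have [k1 s1] := key _ _ he wF; have [k2 s2] := key _ _ he' w'F.
case: (eqVneq e e') => // ne; exfalso; apply: hf.
apply: (two_cyc xF hp hu s1 ne); by [rewrite -k1 | rewrite -k2].
Qed.


Definition Fed (F : {set V}) v :=
  [set e | (src e == v) && (dst e \in F) || (dst e == v) && (src e \in F)].
Definition Bed (C : {set V}) v :=
  [set e | (src e == v) && (dst e \notin C) || (dst e == v) && (src e \notin C)].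
Definition Xset (X Y : {set V}) :=
  [set e | ((src e \in X) && (dst e \in Y)) || ((src e \in Y) && (dst e \in X))].

Lemma cardU_le (T : finType) (A B : {set T}) : #|A :|: B| <= #|A| + #|B|.
Proof. by rewrite cardsU leq_subr. Qed.

Lemma Fed_joins (F : {set V}) v e : e \in Fed F v -> exists w, joins e v w /\ w \in F.
Proof.
rewrite inE /Defs.joins => /orP[/andP[/eqP h1 h2]|/andP[/eqP h1 h2]].
- by exists (dst e); split => //; rewrite h1 !eqxx.
- by exists (src e); split => //; rewrite h1 !eqxx orbT.
Qed.

Lemma Fed_le1 (F : {set V}) x p : is_forest src dst F -> x \in F ->
  path (adjIn F) x p -> uniq (x::p) -> closedv F x (x::p) -> #|Fed F x| <= 1.
Proof.
move=> hf xF hp hu cl; apply/card_le1_eqP => e1 e2 h1 h2.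
have [w1 [j1 w1F]] := Fed_joins h1; have [w2 [j2 w2F]] := Fed_joins h2.
exact: (leaf hf xF hp hu cl j2 j1 w2F w1F).
Qed.


Lemma Bed_sub (C F : {set V}) v :
  Bed C v \subset Fed F v :|: Fed (~: (C :|: F)) v.
Proof.
apply/subsetP => e; rewrite /Bed /Fed !inE.
by case: (src e == v); case: (dst e == v); case: (src e \in C); case: (dst e \in C);
  case: (src e \in F); case: (dst e \in F).
Qed.

Lemma Red_sub (F R : {set V}) z v : v \in compIn src dst F z ->
  Fed R v \subset Xset (compIn src dst F z) R.
Proof.
move=> hv; apply/subsetP => e; rewrite /Xset /Fed !inE.
by case/orP => /andP[/eqP h1 h2]; rewrite -h1 /compIn inE in hv; rewrite hv h2 ?orbT.
Qed.

Lemma find_leaf (C F : {set V}) u : is_forest src dst F -> [disjoint C & F] ->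
  (forall x, x \in F -> eXY src dst (compIn src dst F x) (~: (C :|: F)) <= 1) ->
  u \in F -> exists2 v, v \in F & #|Bed C v| <= 1.
Proof.
move=> hf hd hc uF.
set R := ~: (C :|: F).
have [y1 [q1 [y1F hq1 uq1 cq1 [lq1 sq1]]]] :=
  @ext_front F #|V| u [::] ltac:(rewrite /=; lia) uF isT isT.
have [x2 [p2 [hp2 er2 ex2 el2]]] := rev_pathS hq1.
have ux2 : uniq (x2 :: p2) by rewrite -er2 rev_uniq.
have x2F : x2 \in F by rewrite ex2; apply: (path_sub y1F hq1); exact: mem_last.
have [z [r [zF hr ur cz [lr sr]]]] := @ext_front F #|V| x2 p2 ltac:(lia) x2F hp2 ux2.
have [x3 [p3 [hp3 er3 ex3 el3]]] := rev_pathS hr.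
have ux3 : uniq (x3 :: p3) by rewrite -er3 rev_uniq.
have ey : x3 = y1 by rewrite ex3 lr el2.
have cx3 : closedv F x3 (x3 :: p3).
  move=> e w hj wF; rewrite -er3 mem_rev; apply: sr; rewrite -er2 mem_rev.
  apply: (cq1 e) => //; by rewrite -ey.
have x3F : x3 \in F by rewrite ey.
have f1 := Fed_le1 hf zF hr ur cz.
have f2 := Fed_le1 hf x3F hp3 ux3 cx3.
have zz : z \in compIn src dst F z by rewrite inE connect0.
have hz := hc z zF.
have bz v : #|Bed C v| <= #|Fed F v| + #|Fed R v|.
  by apply: leq_trans (subset_leq_card (Bed_sub C F v)) (cardU_le _ _).
move: f2 x3F; rewrite ex3 => f2 yF.
case: r hr ur cz lr sr f1 f2 yF {hp3 er3 ex3 el3 cx3 ux3 ey} => [|a r'] hr ur cz lr sr f1 f2 yF.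
- exists z => //; apply: leq_trans (bz z) _.
  have -> : #|Fed F z| = 0.
    apply/eqP; rewrite cards_eq0; apply/negPn/negP => /set0Pn [e he].
    have [w [hj wF]] := Fed_joins he.
    have := cz e w hj wF; rewrite mem_seq1 => /eqP ew.
    by apply: (no_loop hf zF (e := e)); rewrite -{2}ew.
  by rewrite add0n; exact: leq_trans (subset_leq_card (@Red_sub F R z z zz)) hz.
- set y := last z (a :: r') in f2 yF *.
  have hy : y \in compIn src dst F z by rewrite /compIn inE; apply: (path_connect hr); exact: mem_last.
  have zy : z != y.
    apply/negP => /eqP ezy; move: ur; rewrite cons_uniq => /andP[+ _].
    by rewrite ezy /y /= mem_last.
  have hdis : Fed R z :&: Fed R y = set0.
    apply/setP => e; rewrite !inE.
    apply/negP => /andP[/orP[/andP[/eqP a1 b1]|/andP[/eqP a1 b1]] /orP[/andP[/eqP a2 b2]|/andP[/eqP a2 b2]]].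
    + by rewrite -a1 -a2 eqxx in zy.
    + by move: b1; rewrite a2 yF orbT.
    + by move: b1; rewrite a2 yF orbT.
    + by rewrite -a1 -a2 eqxx in zy.
  have hsum : #|Fed R z| + #|Fed R y| <= 1.
    rewrite -cardsUI hdis cards0 addn0; apply: leq_trans _ hz.
    apply: subset_leq_card; rewrite subUset (@Red_sub F R z z zz).
    exact: (@Red_sub F R z y hy).
  case: (posnP #|Fed R z|) => h0.
  + exists z => //; apply: leq_trans (bz z) _; rewrite h0 addn0 //.
  + exists y => //; apply: leq_trans (bz y) _.
    have h1 : #|Fed R z| + #|Fed R y| <= #|Fed R z| + 0 by rewrite addn0; exact: leq_trans hsum h0.
    rewrite leq_add2l leqn0 in h1; by rewrite (eqP h1) addn0.
Qed.


End S.

Section S2.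
Variables (V E : finType) (src dst : E -> V).
Local Notation joins := (joins src dst).
Local Notation adjIn := (adjIn src dst).
Local Notation has_cycle_in := (has_cycle_in src dst).
Local Notation Xset := (Xset src dst).
Local Notation Bed := (Bed src dst).
Ltac atoms e v C F hd vC vF :=
  case: (eqVneq (src e) v) => [->|_]; case: (eqVneq (dst e) v) => [->|_];
  rewrite ?eqxx ?vC ?vF /=; try by [];
  (let H := fresh "H" in case: (boolP (src e \in F)) => [/(disjointFl hd) H | _]; rewrite ?H);
  (let H := fresh "H" in case: (boolP (dst e \in F)) => [/(disjointFl hd) H | _]; rewrite ?H);
  rewrite ?eqxx ?vC ?vF /=; try by [];
  (case: (src e \in C)); (case: (dst e \in C)); rewrite ?eqxx ?vC ?vF /=; try by [].

Lemma arith (f w xb x b xa a z sd s t ab : nat) : f <= w -> w <= xb -> xb <= x + b -> b <= 1 ->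
  xa + 0 = x + a -> xa <= z -> sd + 0 = s + t -> sd <= ab -> ab <= a + b -> 3 <= s + t ->
  true + f <= z.
Proof. move=> *; lia. Qed.

Lemma main_ind (C F : {set V}) : (forall v, 3 <= deg src dst v) -> forall n,
  #|F| = n -> FVC src dst C F -> #|F| <= eXY src dst C F.
Proof.
move=> hdeg n; elim: n C F => [|n IH] C F hn [hd hf hc]; first by rewrite hn.
have : F != set0 by rewrite -card_gt0 hn.
case/set0Pn => u uF.
have [v vF hB] := find_leaf hf hd hc uF.
have vC : (v \in C) = false by rewrite (disjointFl hd vF).
have hn' : #|F :\ v| = n by move: hn; rewrite (cardsD1 v F) vF; lia.
have hU : (v |: C) :|: (F :\ v) = C :|: F.
  apply/setP => x; rewrite !inE; case: (eqVneq x v) => [->|_]; by rewrite ?vF ?orbT.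
have fvc : FVC src dst (v |: C) (F :\ v).
  split.
  - rewrite disjoint_subset; apply/subsetP => x; rewrite !inE => /orP[/eqP->|xC].
    + by rewrite eqxx.
    + by rewrite (disjointFr hd xC) andbF.
  - move=> [k [vs [es [h1 h2 h3 h4]]]]; apply: hf; exists k, vs, es; split => // i.
    by have := h3 i; rewrite !inE => /andP[_ ->].
  - move=> x; rewrite inE => /andP[_ xF]; rewrite hU.
    apply: leq_trans (hc x xF); apply: subset_leq_card.
    have sub : forall y, connect (adjIn (F :\ v)) x y -> connect (adjIn F) x y.
      move=> y; apply: connect_sub => a b hab.
      apply: connect1; move: hab; rewrite /Defs.adjIn !inE.
      by case/and3P => /andP[_ ->] /andP[_ ->] ->.
    apply/subsetP => e; rewrite /compIn !inE => /orP[/andP[h1 h2]|/andP[h1 h2]].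
    + by rewrite (sub _ h1) h2.
    + by rewrite (sub _ h2) h1 orbT.
have ih := IH _ _ hn' fvc.
set A := [set e | (src e == v) && (dst e \in C) || (dst e == v) && (src e \in C)].
set X := Xset C (F :\ v).
have s1 : Xset (v |: C) (F :\ v) \subset X :|: Bed C v.
  apply/subsetP => e; rewrite /X /Xset /Bed !inE.
  atoms e v C F hd vC vF.
have s2 : X :|: A \subset Xset C F.
  apply/subsetP => e; rewrite /X /Xset /A !inE.
  atoms e v C F hd vC vF.
have s3 : X :&: A = set0.
  apply/setP => e; rewrite /X /Xset /A !inE.
  atoms e v C F hd vC vF.
have s4 : [set e | src e == v] :&: [set e | dst e == v] = set0.
  apply/setP => e; rewrite !inE; apply/negP => /andP[/eqP h1 /eqP h2].
  by apply: (no_loop hf vF (e := e)); rewrite /Defs.joins h1 h2 eqxx.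
have s5 : [set e | src e == v] :|: [set e | dst e == v] \subset A :|: Bed C v.
  apply/subsetP => e; rewrite /A /Bed !inE.
  atoms e v C F hd vC vF.
have d1 := subset_leq_card s1.
have d2 := subset_leq_card s2.
have d3 := cardsUI X A; rewrite s3 cards0 in d3.
have d4 := cardsUI [set e | src e == v] [set e | dst e == v]; rewrite s4 cards0 in d4.
have d5 := subset_leq_card s5.
have d6 := cardU_le X (Bed C v).
have d7 := cardU_le A (Bed C v).
have d8 := hdeg v; rewrite /deg in d8.
rewrite (cardsD1 v F) vF.
change (eXY src dst (v |: C) (F :\ v)) with #|Xset (v |: C) (F :\ v)| in ih.
change (eXY src dst C F) with #|Xset C F|.
exact: (arith ih d1 d6 hB d3 d2 d4 d5 d7 d8).
Qed.

End S2.

Theorem lemma19 (V E : finType) (src dst : E -> V) (C F : {set V}) :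
  (forall v : V, 3 <= deg src dst v) ->
  FVC src dst C F ->
  #|F| <= eXY src dst C F.
Proof. move=> h; exact: (main_ind h erefl). Qed.
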